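(* Let $\Sigma$, $\mathcal I$, $P$ and $R(\cdot)$ be as follows: $\Sigma\subseteq\mathcal L_\Diamond$ is finite and closed under subformulas; $\mathcal I$ is a finite weak $\Sigma$-quasimodel such that for every deterministic weak $\mathcal L_\Diamond$-quasimodel $\mathcal A$ the relation $\rightharpoonup\ \subseteq|\mathcal I|\times|\mathcal A|$ is a surjective dynamic simulation; $P=\{w\in|\mathcal I|:\not\vdash\mathrm{Sim}(w)\}$; and $R(w)$ is the set of $v\in P$ reachable from $w$ by a finite $S_{\mathcal I}$-path all of whose elements lie in $P$. If $w\in P$ and $\Diamond\psi\in\ell^+(w)$, then there is $v\in R(w)$ with $\psi\in\ell^+(v)$.
   Context: $\mathcal L_\Diamond$ is the propositional language with $\bot,\wedge,\vee,\to$ and unary modalities $\bigcirc$, $\Diamond$. ${\sf ITL}^0_\Diamond$ is axiomatized by all intuitionistic propositional tautologies, $\neg\bigcirc\bot$, $\bigcirc\varphi\wedge\bigcirc\psi\to\bigcirc(\varphi\wedge\psi)$, $\bigcirc(\varphi\vee\psi)\to\bigcirc\varphi\vee\bigcirc\psi$, $\bigcirc(\varphi\to\psi)\to(\bigcirc\varphi\to\bigcirc\psi)$, $\varphi\vee\bigcirc\Diamond\varphi\to\Diamond\varphi$, closed under modus ponens and the rules $\varphi/\bigcirc\varphi$, $(\varphi\to\psi)/(\Diamond\varphi\to\Diamond\psi)$, $(\bigcirc\varphi\to\varphi)/(\Diamond\varphi\to\varphi)$; $\vdash\varphi$ means $\varphi\in{\sf ITL}^0_\Diamond$. A path $u_0,\dots,u_n$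 ($n\ge0$) is an $S_{\mathcal I}$-path if $u_i\,S_{\mathcal I}\,u_{i+1}$ for $i<n$. Types: a $\Sigma$-type is a pair $\Phi=(\Phi^-;\Phi^+)$ of subsets of $\Sigma$ with $\Phi^-\cap\Phi^+=\varnothing$, $\Phi^-\cup\Phi^+=\Sigma$, $\bot\notin\Phi^+$, $\wedge,\vee$ in $\Phi^+$ behaving classically, ($\varphi\to\psi\in\Phi^+\Rightarrow\varphi\in\Phi^-$ or $\psi\in\Phi^+$), ($\Diamond\varphi\in\Phi^-\Rightarrow\varphi\in\Phi^-$). $\Phi\preccurlyeq_T\Psi$ iff $\Phi^+\subseteq\Psi^+$; $\Phi\subseteq_T\Psi$ iff $\Phi^-\subseteq\Psi^-$, $\Phi^+\subseteq\Psi^+$. $\Phi\,S_T\,\Psi$ iff: $\bigcirc\varphi\in\Phi^+\Rightarrow\varphi\in\Psi^+$; $\bigcirc\varphi\in\Phi^-\Rightarrow\varphi\in\Psi^-$; ($\Diamond\varphi\in\Phi^+$, $\varphi\in\Phi^-$)$\Rightarrow\Diamond\varphi\in\Psi^+$; $\Diamond\varphi\in\Phi^-\Rightarrow\Diamond\varphi\in\Psi^-$. A $\Sigma$-labelled frame is $(W,\preccurlyeq,\ell)$, $\preccurlyeq$ a partial order, $\ell$ mapping to $\Sigma$-types, monotone w.r.t. $\preccurlyeq_T$, and if $\varphi\to\psi\in\ell^-(w)$ then some $v\succcurlyeq w$ has $\varphi\in\ell^+(v)$, $\psi\in\ell^-(v)$. A weak $\Sigma$-quasimodel adds $S\subseteq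 W\times W$ forward-confluent (if $w\preccurlyeq w'$, $w\,S\,v$ then some $v'\succcurlyeq v$ has $w'\,S\,v'$) and sensible ($w\,S\,v\Rightarrow\ell(w)\,S_T\,\ell(v)$); deterministic if $S$ is a function. A simulation from a $\Sigma$-labelled $\mathcal X$ to a $\Delta$-labelled $\mathcal Y$ ($\Sigma\subseteq\Delta$) is a forward-confluent $E\subseteq|\mathcal X|\times|\mathcal Y|$ with $x\,E\,y\Rightarrow\ell(x)\subseteq_T\ell(y)$; $x\rightharpoonup y$ iff some simulation relates them; $E$ is dynamic if $x\,E\,y$ and $y\,S\,y'$ imply some $x'$ with $x\,S\,x'$, $x'\,E\,y'$; surjective if every point of $\mathcal A$ is in its range. $\mathrm{Sim}(w)=\bigwedge\ell^+(w)\to\big(\bigvee\ell^-(w)\vee\bigvee_{v\succ w}\mathrm{Sim}(v)\big)$, defined by backwards induction on $\prec$ ($\bigwedge\varnothing=\top$, $\bigvee\varnothing=\bot$). *)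

(* Defs.v *)
From Stdlib Require List.
From mathcomp Require Import all_boot.
Set Implicit Arguments.
Unset Strict Implicit.
Unset Printing Implicit Defensive.

Inductive form : Type :=
| FVar  : nat -> form
| FBot  : form
| FAnd  : form -> form -> form
| FOr   : form -> form -> form
| FImp  : form -> form -> form
| FNext : form -> form
| FDia  : form -> form.

Definition FNeg (p : form) : form := FImp p FBot.
Definition FTop : form := FImp FBot FBot.

Inductive ITL : form -> Prop :=
| ax_K   p q     : ITL (FImp p (FImp q p))
| ax_S   p q r   : ITL (FImp (FImp p (FImp q r)) (FImp (FImp p q) (FImp p r)))
| ax_AndI p q    : ITL (FImp p (FImp q (FAnd p q)))
| ax_AndE1 p q   : ITL (FImp (FAnd p q) p)
| ax_AndE2 p q   : ITL (FImp (FAnd p q) q)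
| ax_OrI1 p q    : ITL (FImp p (FOr p q))
| ax_OrI2 p q    : ITL (FImp q (FOr p q))
| ax_OrE p q r   : ITL (FImp (FImp p r) (FImp (FImp q r) (FImp (FOr p q) r)))
| ax_EFQ p       : ITL (FImp FBot p)
| ax_NextBot     : ITL (FNeg (FNext FBot))
| ax_NextAnd p q : ITL (FImp (FAnd (FNext p) (FNext q)) (FNext (FAnd p q)))
| ax_NextOr p q  : ITL (FImp (FNext (FOr p q)) (FOr (FNext p) (FNext q)))
| ax_NextK p q   : ITL (FImp (FNext (FImp p q)) (FImp (FNext p) (FNext q)))
| ax_DiaFix p    : ITL (FImp (FOr p (FNext (FDia p))) (FDia p))
| r_MP p q       : ITL (FImp p q) -> ITL p -> ITL q
| r_Nec p        : ITL p -> ITL (FNext p)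
| r_DiaMono p q  : ITL (FImp p q) -> ITL (FImp (FDia p) (FDia q))
| r_DiaInd p     : ITL (FImp (FNext p) p) -> ITL (FImp (FDia p) p).

Definition subformula_closed (Sig : seq form) : Prop :=
  forall p, List.In p Sig ->
    match p with
    | FAnd a b | FOr a b | FImp a b => List.In a Sig /\ List.In b Sig
    | FNext a | FDia a => List.In a Sig
    | _ => True
    end.

Definition is_type (Sig : form -> Prop) (neg pos : form -> bool) : Prop :=
  [/\ (forall p, ~ (neg p /\ pos p)),
      (forall p, Sig p <-> (neg p \/ pos p)),
      ~ pos FBot
    & (forall p q, Sig (FAnd p q) -> (pos (FAnd p q) <-> (pos p /\ pos q)))] /\
  [/\
      (forall p q, Sig (FOr p q) -> (pos (FOr p q) <-> (pos p \/ pos q))),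
      (forall p q, pos (FImp p q) -> neg p \/ pos q)
    & (forall p, neg (FDia p) -> neg p)].

Definition S_T (negF posF negP posP : form -> bool) : Prop :=
  [/\ (forall p, posF (FNext p) -> posP p),
      (forall p, negF (FNext p) -> negP p),
      (forall p, posF (FDia p) -> negF p -> posP (FDia p))
    & (forall p, negF (FDia p) -> negP (FDia p))].

Definition labelled_frame (Sig : form -> Prop) (W : Type)
    (le : W -> W -> Prop) (neg pos : W -> form -> bool) : Prop :=
  [/\ (forall w, le w w),
      (forall w v, le w v -> le v w -> w = v)
    & (forall w v u, le w v -> le v u -> le w u)] /\
  [/\
      (forall w, is_type Sig (neg w) (pos w)),
      (forall w v p, le w v -> pos w p -> pos v p)
    & (forall w p q, neg w (FImp p q) ->
         exists v, [/\ le w v, pos v p & neg v q])].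

Definition forward_confluent (W : Type) (le S : W -> W -> Prop) : Prop :=
  forall w w' v, le w w' -> S w v -> exists v', le v v' /\ S w' v'.

Definition weak_quasimodel (Sig : form -> Prop) (W : Type)
    (le S : W -> W -> Prop) (neg pos : W -> form -> bool) : Prop :=
  [/\ labelled_frame Sig le neg pos,
      forward_confluent le S
    & (forall w v, S w v -> S_T (neg w) (pos w) (neg v) (pos v))].

Definition deterministic (W : Type) (S : W -> W -> Prop) : Prop :=
  forall w, exists v, S w v /\ forall v', S w v' -> v' = v.

Definition LDia : form -> Prop := fun _ => True.

Definition simulation (X Y : Type) (leX : X -> X -> Prop)
    (negX posX : X -> form -> bool) (leY : Y -> Y -> Prop)
    (negY posY : Y -> form -> bool) (E : X -> Y -> Prop) : Prop :=
  (forall x x' y, E x y -> leX x x' -> exists y', leY y y' /\ E x' y') /\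
  (forall x y, E x y ->
     (forall p, negX x p -> negY y p) /\ (forall p, posX x p -> posY y p)).

Definition simulates (X Y : Type) (leX : X -> X -> Prop)
    (negX posX : X -> form -> bool) (leY : Y -> Y -> Prop)
    (negY posY : Y -> form -> bool) (x : X) (y : Y) : Prop :=
  exists E, simulation leX negX posX leY negY posY E /\ E x y.

Definition dynamic (X Y : Type) (SX : X -> X -> Prop) (SY : Y -> Y -> Prop)
    (E : X -> Y -> Prop) : Prop :=
  forall x y y', E x y -> SY y y' -> exists x', SX x x' /\ E x' y'.

Definition surjective_rel (X Y : Type) (E : X -> Y -> Prop) : Prop :=
  forall y, exists x, E x y.

(* Sim(w) for a finite frame, by backwards induction on the strict     *)
(* order.  We use fuel #|W|: since strict chains have length < #|W|,   *)
(* the base case (fuel 0) is never reached.                            *)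
Definition bigAnd (l : seq form) : form := foldr FAnd FTop l.
Definition bigOr (l : seq form) : form := foldr FOr FBot l.

Section SimDef.
Variables (W : finType) (Sig : seq form) (le : rel W) (neg pos : W -> form -> bool).

Fixpoint simN (n : nat) (w : W) : form :=
  match n with
  | 0 => FTop
  | n'.+1 =>
      FImp (bigAnd (filter (pos w) Sig))
           (FOr (bigOr (filter (neg w) Sig))
                (bigOr [seq simN n' v | v <- enum W & le w v && (v != w)]))
  end.

Definition Sim (w : W) : form := simN #|W| w.

End SimDef.

Definition Pset (W : finType) (Sig : seq form) (le : rel W)
    (neg pos : W -> form -> bool) (w : W) : Prop :=
  ~ ITL (Sim Sig le neg pos w).

Inductive reachIn (W : Type) (P : W -> Prop) (S : W -> W -> Prop) (w : W)
    : W -> Prop :=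
| reach_refl : P w -> reachIn P S w w
| reach_step u v : reachIn P S w u -> S u v -> P v -> reachIn P S w v.

(* Main.v *)
Require Import Defs.
From Stdlib Require List.
From mathcomp Require Import all_boot.
From Stdlib Require Import ClassicalEpsilon FunctionalExtensionality ProofIrrelevance PropExtensionality.
Set Implicit Arguments.
Unset Strict Implicit.
Unset Printing Implicit Defensive.

Lemma ITL_id a : ITL (FImp a a).
Proof.
apply: r_MP (ax_K a a).
apply: r_MP (ax_K a (FImp a a)).
exact: ax_S.
Qed.

Inductive Der (G : form -> Prop) : form -> Prop :=
| D_ax p : ITL p -> Der G p
| D_hyp p : G p -> Der G p
| D_mp p q : Der G (FImp p q) -> Der G p -> Der G q.
Arguments D_ax {G p}. Arguments D_hyp {G p}. Arguments D_mp {G p q}.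

Lemma Der_mono (G G' : form -> Prop) : (forall p, G p -> G' p) ->
  forall p, Der G p -> Der G' p.
Proof.
move=> H p; elim=> [q Hq|q Hq|q r _ H1 _ H2]; [exact: D_ax|exact/D_hyp/H|exact: D_mp H1 H2].
Qed.

Lemma Der_ITL (G : form -> Prop) p : (forall q, G q -> ITL q) -> Der G p -> ITL p.
Proof.
move=> H; elim=> [q Hq|q Hq|q r _ H1 _ H2]; [done|exact: H|exact: r_MP H1 H2].
Qed.

Lemma DT (G : form -> Prop) a p : Der (fun q => G q \/ q = a) p -> Der G (FImp a p).
Proof.
elim=> [q Hq|q [Hq|->]|q r _ H1 _ H2].
- exact: D_mp (D_ax (ax_K q a)) (D_ax Hq).
- exact: D_mp (D_ax (ax_K q a)) (D_hyp Hq).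
- exact: D_ax (ITL_id a).
- exact: D_mp (D_mp (D_ax (ax_S a q r)) H1) H2.
Qed.

Lemma Der_cut (G : form -> Prop) a p : Der G a -> Der (fun q => G q \/ q = a) p -> Der G p.
Proof. move=> Ha /DT H; exact: D_mp H Ha. Qed.

Lemma ITL_trans a b c : ITL (FImp a b) -> ITL (FImp b c) -> ITL (FImp a c).
Proof.
move=> H1 H2; apply: (@Der_ITL (fun _ => False)) => //; apply: DT.
apply: D_mp (D_ax H2) _; apply: D_mp (D_ax H1) _; apply: D_hyp; by right.
Qed.

Lemma next_mono a b : ITL (FImp a b) -> ITL (FImp (FNext a) (FNext b)).
Proof. move=> H; exact: r_MP (ax_NextK a b) (r_Nec H). Qed.

Lemma thm_diaI p : ITL (FImp p (FDia p)).
Proof. exact: ITL_trans (ax_OrI1 _ _) (ax_DiaFix p). Qed.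

Lemma thm_diaN p : ITL (FImp (FNext (FDia p)) (FDia p)).
Proof. exact: ITL_trans (ax_OrI2 _ _) (ax_DiaFix p). Qed.

Lemma thm_diaU p : ITL (FImp (FDia p) (FOr p (FNext (FDia p)))).
Proof.
set chi := FOr p (FNext (FDia p)).
have H1 : ITL (FImp (FNext (FDia p)) chi) by exact: ax_OrI2.
have H2 : ITL (FImp (FNext chi) chi).
  apply: ITL_trans (ax_NextOr _ _) _.
  exact: r_MP (r_MP (ax_OrE _ _ chi) (ITL_trans (next_mono (thm_diaI p)) H1))
           (ITL_trans (next_mono (thm_diaN p)) H1).
apply: ITL_trans (r_DiaMono (ax_OrI1 p (FNext (FDia p)))) (r_DiaInd H2).
Qed.

Definition theory (G : form -> Prop) :=
  [/\ (forall p, Der G p -> G p), ~ G FBot & (forall a b, G (FOr a b) -> G a \/ G b)].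

Section Th.
Variables (G : form -> Prop) (HG : theory G).
Lemma th_thm p : ITL p -> G p.
Proof. case: HG => H _ _ Hp; exact/H/D_ax. Qed.
Lemma th_mp a b : G (FImp a b) -> G a -> G b.
Proof. case: HG => H _ _ H1 H2; apply: H; exact: D_mp (D_hyp H1) (D_hyp H2). Qed.
Lemma th_imp a b : ITL (FImp a b) -> G a -> G b.
Proof. move=> H; apply: th_mp; exact: th_thm. Qed.
Lemma th_and a b : G (FAnd a b) <-> G a /\ G b.
Proof.
split=> [H|[H1 H2]]; first by split; apply: th_imp H; [exact: ax_AndE1|exact: ax_AndE2].
apply: th_mp H2; apply: th_imp H1; exact: ax_AndI.
Qed.
Lemma th_or a b : G (FOr a b) <-> G a \/ G b.
Proof.
split=> [|[H|H]]; first by case: HG => _ _; apply.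
- apply: th_imp H; exact: ax_OrI1.
- apply: th_imp H; exact: ax_OrI2.
Qed.
Lemma th_bigAnd L : G (bigAnd L) <-> (forall p, List.In p L -> G p).
Proof.
elim: L => [|a L IH] /=; first by split=> // _; apply: th_thm; exact: ax_EFQ.
rewrite th_and IH; split=> [[Ha HL] p [<-|Hp]|H]; [done|exact: HL|].
split; [apply: H; by left | move=> p Hp; apply: H; by right].
Qed.
Lemma th_bigOr L : G (bigOr L) <-> (exists p, List.In p L /\ G p).
Proof.
elim: L => [|a L IH] /=.
  split=> [|[p [[]]]]; by case: HG.
rewrite th_or IH; split=> [[Ha|[p [Hp H]]]|[p [[<-|Hp] H]]].
- by exists a; split=> //; left.
- by exists p; split=> //; right.
- by left.
- by right; exists p.
Qed.
End Th.

Fixpoint enc (p : form) : GenTree.tree nat :=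
  match p with
  | FVar n => GenTree.Leaf n
  | FBot => GenTree.Node 0 [::]
  | FAnd a b => GenTree.Node 1 [:: enc a; enc b]
  | FOr a b => GenTree.Node 2 [:: enc a; enc b]
  | FImp a b => GenTree.Node 3 [:: enc a; enc b]
  | FNext a => GenTree.Node 4 [:: enc a]
  | FDia a => GenTree.Node 5 [:: enc a]
  end.

Fixpoint dec (t : GenTree.tree nat) : form :=
  match t with
  | GenTree.Leaf n => FVar n
  | GenTree.Node 1 [:: a; b] => FAnd (dec a) (dec b)
  | GenTree.Node 2 [:: a; b] => FOr (dec a) (dec b)
  | GenTree.Node 3 [:: a; b] => FImp (dec a) (dec b)
  | GenTree.Node 4 [:: a] => FNext (dec a)
  | GenTree.Node 5 [:: a] => FDia (dec a)
  | _ => FBot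
  end.

Lemma encK p : dec (enc p) = p.
Proof. by elim: p => //= [a -> b ->|a -> b ->|a -> b ->|a ->|a ->]. Qed.

Definition enumF (n : nat) : form :=
  match unpickle n with Some t => dec t | None => FBot end.

Lemma enumF_surj p : exists n, enumF n = p.
Proof. exists (pickle (enc p)); by rewrite /enumF pickleK encK. Qed.

Section Lind.
Variables (G0 : form -> Prop) (b : form).

Fixpoint chain (n : nat) : form -> Prop :=
  match n with
  | 0 => G0
  | n'.+1 => fun q => chain n' q \/
        (q = enumF n' /\ ~ Der (fun r => chain n' r \/ r = enumF n') b)
  end.

Definition lim q := exists n, chain n q.

Lemma chain_mono m n q : m <= n -> chain m q -> chain n q.
Proof.
move=> /subnK <-; elim: (n - m) => [|k IH] //= H; left; exact: IH.
Qed.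

Lemma lim_compact p : Der lim p -> exists n, Der (chain n) p.
Proof.
elim=> [q Hq|q [n Hn]|q r _ [n1 H1] _ [n2 H2]].
- by exists 0; apply: D_ax.
- by exists n; apply: D_hyp.
- exists (maxn n1 n2); apply: D_mp.
  + apply: Der_mono H1 => s; apply: chain_mono; exact: leq_maxl.
  + apply: Der_mono H2 => s; apply: chain_mono; exact: leq_maxr.
Qed.

Hypothesis Hb : ~ Der G0 b.

Lemma chain_nder n : ~ Der (chain n) b.
Proof.
elim: n => [|n IH] //=.
case: (classic (Der (fun r => chain n r \/ r = enumF n) b)) => Hd.
- apply: contra_not IH; apply: Der_mono => q [//|[_ H]]; by [].
- apply: contra_not Hd; apply: Der_mono => q [H|[-> _]]; by [left|right].
Qed.

Lemma lim_nder : ~ Der lim b.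
Proof. by move=> /lim_compact [n Hn]; apply: (chain_nder Hn). Qed.

Lemma lim_closed p : Der lim p -> lim p.
Proof.
move=> Hp; case: (enumF_surj p) => k Hk.
exists k.+1; right; split=> // Hd; apply: lim_nder.
apply: Der_cut Hp _; apply: Der_mono Hd => q [H|->]; [left; by exists k|by right].
Qed.

Lemma lim_ext q : G0 q -> lim q.
Proof. by exists 0. Qed.

Lemma lim_theory : theory lim.
Proof.
split; first exact: lim_closed.
- move=> H; apply: lim_nder; apply: D_mp (D_ax (ax_EFQ b)) (D_hyp H).
- move=> a c Hac.
  have key : forall x, ~ lim x -> Der lim (FImp x b).
    move=> x Hx; case: (enumF_surj x) => i Hi.
    have Hd : Der (fun r => chain i r \/ r = enumF i) b.
      apply: NNPP => Hn; apply: Hx; exists i.+1; by right.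
    apply: DT; apply: Der_mono Hd => q [H|->]; [left; by exists i|by right].
  case: (classic (lim a)) => Ha; first by left.
  case: (classic (lim c)) => Hc; first by right.
  exfalso; apply: lim_nder.
  apply: D_mp (D_hyp Hac).
  exact: D_mp (D_mp (D_ax (ax_OrE a c b)) (key _ Ha)) (key _ Hc).
Qed.
End Lind.

Lemma lindenbaum (G0 : form -> Prop) b : ~ Der G0 b ->
  exists D, [/\ theory D, (forall q, G0 q -> D q) & ~ D b].
Proof.
move=> Hb; exists (lim G0 b); split; [exact: lim_theory|exact: lim_ext|].
move=> H; exact: (lim_nder Hb) (D_hyp H).
Qed.

Definition asb (P : Prop) : bool := if excluded_middle_informative P then true else false.
Lemma asbE P : asb P <-> P.
Proof. rewrite /asb; case: excluded_middle_informative => //. Qed.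

Definition CP := {f : form -> bool | theory (fun p => f p)}.
Definition cval (x : CP) : form -> bool := proj1_sig x.
Definition cth (x : CP) : theory (fun p => cval x p) := proj2_sig x.
Definition cle (x y : CP) : Prop := forall p, cval x p -> cval y p.
Definition cpos (x : CP) (p : form) : bool := cval x p.
Definition cneg (x : CP) (p : form) : bool := ~~ cval x p.

Lemma next_theory (G : form -> Prop) : theory G -> theory (fun p => G (FNext p)).
Proof.
move=> HG; split.
- move=> p; elim=> [q Hq|q Hq|q r _ H1 _ H2] //.
  + apply: (th_thm HG); exact: r_Nec.
  + apply: (th_mp HG) H2; apply: (th_mp HG) H1; apply: (th_thm HG); exact: ax_NextK.
- move=> H; have [_ Hb _] := HG; apply: Hb; apply: (th_mp HG) H; exact: (th_thm HG ax_NextBot).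
- move=> a b H; apply/(th_or HG); apply: (th_imp HG) H; exact: ax_NextOr.
Qed.

Definition sfun (x : CP) : CP :=
  exist (fun f : form -> bool => theory (fun p => f p)) (fun p => cval x (FNext p))
        (next_theory (cth x)).

Definition cS (x y : CP) : Prop := y = sfun x.

Definition mkCP (D : form -> Prop) (H : theory D) : CP.
Proof.
refine (exist _ (fun p => asb (D p)) _).
have E : (fun p => is_true (asb (D p))) = D.
  apply: functional_extensionality => p; apply: propositional_extensionality; exact: asbE.
by rewrite E.
Defined.

Lemma mkCPE D H p : cval (@mkCP D H) p <-> D p.
Proof. exact: asbE. Qed.

Lemma canon_qm : weak_quasimodel LDia cle cS cneg cpos.
Proof.
split.
- split; split.
  + by move=> w p.
  + move=> [f hf] [g hg]; rewrite /cle /cval /= => H1 H2.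
    have E : f = g.
      apply: functional_extensionality => p.
      apply/idP/idP; [exact: H1|exact: H2].
    subst g; f_equal; exact: proof_irrelevance.
  + move=> w v u H1 H2 p Hp; exact/H2/H1.
  + move=> w; have Hw := cth w; split; split.
    * by rewrite /cneg /cpos => p [/negP].
    * rewrite /cneg /cpos => p; split=> _; [case: (cval w p); by [right|left] | done].
    * by case: Hw.
    * move=> p q _; exact: (th_and Hw).
    * move=> p q _; exact: (th_or Hw).
    * rewrite /cneg /cpos => p q H; case E: (cval w p); last by left.
      right; exact: (th_mp Hw) H E.
    * rewrite /cneg => p; apply: contraNN; apply: (th_imp Hw); exact: thm_diaI.
  + move=> w v p H; exact: H.
  + move=> w p q; rewrite /cneg /cpos => /negP Hn.
    have Hd : ~ Der (fun r => cval w r \/ r = p) q.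
      move=> /DT H; apply: Hn; case: (cth w) => Hc _ _; exact: Hc.
    case: (lindenbaum Hd) => D [HD Hsub Hq].
    exists (mkCP HD); split.
    * move=> r Hr; apply/mkCPE; apply: Hsub; by left.
    * apply/mkCPE; apply: Hsub; by right.
    * by apply/negP => /mkCPE.
- move=> w w' v Hle ->; exists (sfun w'); split=> // p; exact: Hle.
- move=> w v ->; split.
  + by [].
  + by [].
  + rewrite /cpos /cneg /= => p H /negP Hn.
    have := th_imp (cth w) (thm_diaU p) H; case/(th_or (cth w)) => //.
  + rewrite /cneg /= => p; apply: contraNN => H; exact: (th_imp (cth w) (thm_diaN p) H).
Qed.

Lemma canon_det : deterministic cS.
Proof. move=> w; exists (sfun w); by split. Qed.

Lemma In_filter {T} (a : pred T) (s : seq T) x :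
  List.In x (filter a s) <-> List.In x s /\ a x.
Proof.
elim: s => [|y s IH] /=; first by split=> [[]|[[]]].
case Ha: (a y) => /=; rewrite IH; split.
- by case=> [<-|[H1 H2]]; [split=> //; left|split=> //; right].
- by case=> [[<-|H1] H2]; [left|right].
- by case=> H1 H2; split=> //; right.
- by case=> [[E|H1] H2]; [subst; rewrite Ha in H2|].
Qed.

Lemma In_map {T U} (f : T -> U) (s : seq T) y :
  List.In y (map f s) <-> exists x, List.In x s /\ y = f x.
Proof.
elim: s => [|x s IH] /=; first by split=> [[]|[x [[]]]].
rewrite IH; split.
- case=> [<-|[z [H1 H2]]]; [by exists x; split=> //; left|by exists z; split=> //; right].
- case=> z [[<-|H1] H2]; [by left|by right; exists z].
Qed.

Lemma In_mem {T : eqType} (x : T) (s : seq T) : List.In x s <-> x \in s.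
Proof.
elim: s => [|y s IH] /=; first by [].
rewrite in_cons IH; split; first by case=> [->|->]; rewrite ?eqxx ?orbT.
by case/orP=> [/eqP->|]; [left|right].
Qed.

Section Main.
Variables (Sig : seq form) (W : finType) (le S : rel W) (neg pos : W -> form -> bool).
Hypothesis HW : weak_quasimodel (fun p => List.In p Sig)
    (fun x y => le x y) (fun x y => S x y) neg pos.

Definition sim := simulates (fun x y => le x y) neg pos cle cneg cpos.
Definition upc (x : W) := #|[set v | le x v]|.
Definition sN := simN Sig le neg pos.

Lemma Hrefl x : le x x.
Proof. by case: HW => [[[H _ _] _] _ _]. Qed.
Lemma Hanti x y : le x y -> le y x -> x = y.
Proof. by case: HW => [[[_ H _] _] _ _]; exact: H. Qed.
Lemma Htrans x y z : le x y -> le y z -> le x z.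
Proof. by case: HW => [[[_ _ H] _] _ _]; exact: H. Qed.
Lemma Htype x : is_type (fun p => List.In p Sig) (neg x) (pos x).
Proof. by case: HW => [[_ [H _ _]] _ _]. Qed.

Lemma upc_gt0 x : 0 < upc x.
Proof. apply/card_gt0P; exists x; by rewrite in_set Hrefl. Qed.

Lemma upc_lt x v : le x v -> v != x -> upc v < upc x.
Proof.
move=> Hle Hne; apply: proper_card; apply/properP; split.
- apply/subsetP => u; rewrite !in_set => H; exact: Htrans Hle H.
- exists x; rewrite !in_set ?Hrefl //; apply/negP => H.
  by move/eqP: Hne; apply; apply: Hanti.
Qed.

Lemma upc_max x : upc x <= #|W|.
Proof. exact: max_card. Qed.

Lemma sim_notin n x G : upc x <= n -> sim x G -> ~~ cval G (sN n x).
Proof.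
elim: n x G => [|n IH] x G Hn [E [[Hfc Hlab] HE]].
  by have := upc_gt0 x; rewrite leqNgt; move: Hn; rewrite leqn0 => /eqP ->.
rewrite /sN /=; apply/negP => Hin.
have Hand : cval G (bigAnd (filter (pos x) Sig)).
  apply/(th_bigAnd (cth G)) => p /In_filter [_ Hp]; exact: (Hlab _ _ HE).2 p Hp.
case/(th_or (cth G)): (th_mp (cth G) Hin Hand).
- case/(th_bigOr (cth G)) => p [/In_filter [_ Hp] Hg].
  by have := (Hlab _ _ HE).1 p Hp; rewrite /cneg Hg.
- case/(th_bigOr (cth G)) => q [/In_map [v [/In_filter [_ /andP [Hle Hne]] ->]] Hg].
  case: (Hfc _ _ _ HE Hle) => G' [HGG' HE'].
  have : ~~ cval G' (sN n v).
    apply: IH; last by exists E.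
    by rewrite -ltnS; apply: leq_trans (upc_lt Hle Hne) Hn.
  by rewrite /sN (HGG' _ Hg).
Qed.

Lemma step m x G : ~~ cval G (sN m.+1 x) ->
  exists D, [/\ cle G D, (forall p, pos x p -> cval D p),
     (forall p, neg x p -> ~~ cval D p)
   & (forall v, le x v -> v != x -> ~~ cval D (sN m v))].
Proof.
move=> H.
have [[_ [_ _ Himp]] _ _] := canon_qm.
case: (Himp G _ _ H) => D [HGD Ha Hb]; exists D; split=> //.
- move=> p Hp; move/(th_bigAnd (cth D)): Ha; apply; apply/In_filter; split=> //.
  have [[_ Hc _ _] _] := Htype x; apply/Hc; by right.
- move=> p Hp; apply/negP => Hd; move/negP: Hb; apply.
  apply/(th_or (cth D)); left; apply/(th_bigOr (cth D)); exists p; split=> //.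
  apply/In_filter; split=> //.
  have [[_ Hc _ _] _] := Htype x; apply/Hc; by left.
- move=> v Hle Hne; apply/negP => Hd; move/negP: Hb; apply.
  apply/(th_or (cth D)); right; apply/(th_bigOr (cth D)); exists (sN m v); split=> //.
  apply/In_map; exists v; split=> //; apply/In_filter; split; last by rewrite Hle Hne.
  apply/In_mem; exact: mem_enum.
Qed.

Definition Erel (x : W) (D : CP) : Prop :=
  exists m, upc x <= m.+1 /\
    [/\ (forall p, pos x p -> cval D p), (forall p, neg x p -> ~~ cval D p)
      & (forall v, le x v -> v != x -> ~~ cval D (sN m v))].

Lemma Erel_sim : simulation (fun x y => le x y) neg pos cle cneg cpos Erel.
Proof.
split.
- move=> x x' D [m [Hm [H1 H2 H3]]] Hle.
  case: (eqVneq x' x) => [->|Hne]; first by exists D; split=> //; exists m.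
  have Hlt := leq_trans (upc_lt Hle Hne) Hm.
  move: (H3 _ Hle Hne); case: m Hm H3 Hlt => [|m] Hm H3 Hlt.
    by have := upc_gt0 x'; rewrite ltnS leqn0 in Hlt; rewrite (eqP Hlt).
  case/step => D' [HDD' K1 K2 K3]; exists D'; split=> //; exists m; split=> //.
- by move=> x D [m [_ [H1 H2 _]]]; split.
Qed.

Lemma sim_exists n x G : upc x <= n.+1 -> ~~ cval G (sN n.+1 x) ->
  exists D, cle G D /\ sim x D.
Proof.
move=> Hn /step [D [HGD H1 H2 H3]]; exists D; split=> //.
exists Erel; split; first exact: Erel_sim.
by exists n; split.
Qed.

Lemma sim_P x G : sim x G -> Pset Sig le neg pos x.
Proof.
move=> Hs HI; have := sim_notin (upc_max x) Hs.
by rewrite (th_thm (cth G) HI).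
Qed.

Lemma sim_lab x G : sim x G ->
  (forall p, neg x p -> ~~ cval G p) /\ (forall p, pos x p -> cval G p).
Proof. by case=> E [[_ H] HE]; exact: H. Qed.

Lemma final (Hsc : subformula_closed Sig) (Hdyn : dynamic (fun x y => S x y) cS sim) w psi :
  Pset Sig le neg pos w -> pos w (FDia psi) ->
  exists v, reachIn (Pset Sig le neg pos) (fun x y => S x y) w v /\ pos v psi.
Proof.
move=> Pw Hd.
have [k Hk] : exists k, #|W| = k.+1.
  case E: #|W| => [|k]; last by exists k.
  by have := leq_trans (upc_gt0 w) (upc_max w); rewrite E.
have Hpsi : List.In psi Sig.
  have [[_ Hc _ _] _] := Htype w.
  have : List.In (FDia psi) Sig by apply/Hc; right.
  by move/Hsc.
apply: NNPP => Hno.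
set R := fun v => reachIn (Pset Sig le neg pos) (fun x y => S x y) w v.
set Rl := [seq v <- enum W | asb (R v)].
set phi := bigAnd [seq Sim Sig le neg pos v | v <- Rl].
have inRl : forall v, R v -> List.In (Sim Sig le neg pos v) [seq Sim Sig le neg pos v | v <- Rl].
  move=> v Hv; apply/In_map; exists v; split=> //; apply/In_filter; split.
  - apply/In_mem; exact: mem_enum.
  - exact/asbE.
have Key : forall v G, R v -> sim v G -> ~~ cval G psi.
  move=> v G Hv Hs; apply: (sim_lab Hs).1.
  have [[_ Hc _ _] _] := Htype v; case/Hc: Hpsi => // Hp.
  by exfalso; apply: Hno; exists v.
have Key2 : forall G, ~~ cval G phi -> exists v D, [/\ R v, cle G D & sim v D].
  move=> G /negP Hn.
  have : ~ (forall p, List.In p [seq Sim Sig le neg pos v | v <- Rl] -> cval G p).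
    by move/(th_bigAnd (cth G)).
  move=> Hall; have [p Hp0] := not_all_ex_not _ _ Hall.
  have [Hp Hnot] := imply_to_and _ _ Hp0.
  case/In_map: Hp => v [Hv' Ep]; subst p.
  have Hv : R v by case/In_filter: Hv' => _ /asbE.
  have : ~~ cval G (sN k.+1 v) by apply/negP; rewrite /sN -Hk; exact: Hnot.
  case/sim_exists => [|D [HGD Hs]]; first by rewrite -Hk upc_max.
  by exists v, D.
have mkpt : forall a b, ~ ITL (FImp a b) -> exists X, cval X a /\ ~~ cval X b.
  move=> a b Hab.
  have Hd' : ~ Der (fun r => r = a) b.
    move=> H; apply: Hab; apply: (@Der_ITL (fun _ => False)) => //; apply: DT.
    by apply: Der_mono H => q ->; right.
  case: (lindenbaum Hd') => D [HD Hsub Hb].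
  exists (mkCP HD); split; [exact/mkCPE/Hsub|by apply/negP => /mkCPE].
have C1 : ITL (FImp psi phi).
  apply: NNPP => /mkpt [X [H1 H2]].
  case: (Key2 _ H2) => v [D [Hv HXD Hs]].
  by move: (Key _ _ Hv Hs); rewrite (HXD _ H1).
have C2 : ITL (FImp (FNext phi) phi).
  apply: NNPP => /mkpt [X [H1 H2]].
  case: (Key2 _ H2) => v [D [Hv HXD Hs]].
  case: (Hdyn v D (sfun D) Hs erefl) => v' [Hvv' Hs'].
  have Rv' : R v' by apply: reach_step Hv Hvv' (sim_P Hs').
  have Hphi : cval (sfun D) phi by apply: HXD.
  move/negP: (sim_notin (upc_max v') Hs'); apply.
  exact: ((th_bigAnd (cth (sfun D)) _).1 Hphi _ (inRl _ Rv')).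
have C3 := ITL_trans (r_DiaMono C1) (r_DiaInd C2).
have [D0 Hs0] : exists D, sim w D.
  have : ~ ITL (sN k.+1 w) by rewrite /sN -Hk; exact: Pw.
  rewrite /sN /= => /mkpt [X [H1 H2]].
  have : ~~ cval X (sN k.+1 w).
    apply/negP => H; move/negP: H2; apply; move: H; rewrite /sN /= => H; have := th_mp (cth X) H H1; exact.
  case/sim_exists => [|D [_ Hs]]; [by rewrite -Hk upc_max|by exists D].
have Hphi0 : cval D0 phi := th_mp (cth D0) (th_thm (cth D0) C3) ((sim_lab Hs0).2 _ Hd).
move/negP: (sim_notin (upc_max w) Hs0); apply.
have Rw : R w by apply: reach_refl.
have := ((th_bigAnd (cth D0) _).1 Hphi0 _ (inRl _ Rw)); exact.
Qed.
End Main.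

Theorem proposition7p3
  (Sig : seq form) (W : finType) (le S : rel W) (neg pos : W -> form -> bool) :
  subformula_closed Sig ->
  weak_quasimodel (fun p => List.In p Sig)
    (fun x y => le x y) (fun x y => S x y) neg pos ->
  (forall (A : Type) (leA SA : A -> A -> Prop) (negA posA : A -> form -> bool),
     weak_quasimodel LDia leA SA negA posA ->
     deterministic SA ->
     let E := simulates (fun x y => le x y) neg pos leA negA posA in
     [/\ simulation (fun x y => le x y) neg pos leA negA posA E,
         dynamic (fun x y => S x y) SA E
       & surjective_rel E]) ->
  forall (w : W) (psi : form),
    Pset Sig le neg pos w ->
    pos w (FDia psi) ->
    exists v, reachIn (Pset Sig le neg pos) (fun x y => S x y) w v /\ pos v psi.
Proof.
move=> Hsc HW Huniv w psi Pw Hd.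
have [_ Hdyn _] := Huniv _ _ _ _ _ canon_qm canon_det.
exact: (final HW Hsc Hdyn Pw Hd).
Qed.
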